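(* Let $m\ge2$ and $\mathfrak p\ge1$ be integers, and let $\zeta$ act on $2\pi$-periodic paths by $\zeta x(\tau)=x(\tau-2\pi/(m\mathfrak p))$, generating an action of $\mathbb Z_{m\mathfrak p}$. (a) (Comet.) Let $\mathfrak q\ge1$ be an integer, $\omega=\mathfrak p/\mathfrak q$, $\nu=1/\mathfrak q$, $\varepsilon>0$, $x_j(\tau)=e^{-J\omega\tau/\nu}q_j(\tau/\nu)$, and $\mathcal H(x)=\int_0^{2\pi}\sum_{j=1}^n m_j[\phi_\alpha(\|x(\tau)-\varepsilon x_j(\tau)\|)-\phi_\alpha(\|x(\tau)\|)]d\tau$. If there is a permutation $\sigma$ of $\{1,\dots,n\}$ with $m_j=m_{\sigma(j)}$ and $q_j(t+2\pi\mathfrak q/(m\mathfrak p))=e^{2\pi J/m}q_{\sigma(j)}(t)$ for all $t$ and $j=1,\dots,n$, then $\mathcal H(\zeta x)=\mathcal H(x)$ for all $x$. (b) (Moon.) Let $m_1=1$, $q_j(t)=e^{tJ}a_j$ with $a_j=\sum_{k\ne j}m_k\frac{a_j-a_k}{\|a_j-a_k\|^{\alpha+1}}$, let $\omega>1$, $\nu=(\omega-1)/\mathfrak p$, $\varepsilon>0$, $x_j(\tau)=e^{-J\omega\tau/\nu}q_j(\tau/\nu)$, $y_j=x_1-x_j$, and $\mathcal H(x)=\int_0^{2\pi}h(x(\tau),\tau)d\tau$ with $h(x,\tau)=\varepsilon^{\alpha-1}\sum_{j=2}^n m_j[\phi_\alpha(\|y_j(\tau)+\varepsilon x\|)+\frac{y_j(\tau)}{\|y_j(\tau)\|^{\alpha+1}}\cdot\varepsilon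 x]$ for $\alpha>1$ and $h(x,\tau)=\sum_{j=2}^n m_j[-\log\frac{\|y_j(\tau)+\varepsilon x\|}{\|y_j(\tau)\|}+\frac{y_j(\tau)}{\|y_j(\tau)\|^2}\cdot\varepsilon x]$ for $\alpha=1$. If there is a permutation $\sigma$ of $\{1,\dots,n\}$ with $\sigma(1)=1$, $a_1=0$, and $m_j=m_{\sigma(j)}$, $a_j=e^{2\pi J/m}a_{\sigma(j)}$ for $j=2,\dots,n$, then $\mathcal H(\zeta x)=\mathcal H(x)$ for all $x$.
   Context: $n\ge2$, $\alpha\ge1$, masses $m_1,\dots,m_n>0$. In (a), $q_1,\dots,q_n$ is a collision-free $2\pi$-periodic solution of the $n$-body problem $\ddot q_j=-\sum_{k\ne j}m_k\frac{q_j-q_k}{\|q_j-q_k\|^{\alpha+1}}$ with $\sum_jm_jq_j=0$ and $\sum_jm_j=1$. $\phi_\alpha(\lambda)=\frac1{\alpha-1}\lambda^{1-\alpha}$ for $\alpha>1$, $\phi_1(\lambda)=-\log\lambda$. $J=\begin{pmatrix}0&1\\-1&0\end{pmatrix}$, $e^{J\theta}=\cos\theta\,I+\sin\theta\,J$. The paths $x$ range over $2\pi$-periodic $H^1$ paths for which the integrands are defined (no collisions). *)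

(* Defs.v *)
From Stdlib Require Import Reals Lra List.
From Coquelicot Require Import Coquelicot.
Open Scope R_scope.

Definition vec := (R * R)%type.
Definition v0 : vec := (0, 0).
Definition vadd (u v : vec) : vec := (fst u + fst v, snd u + snd v).
Definition vsub (u v : vec) : vec := (fst u - fst v, snd u - snd v).
Definition vscale (c : R) (u : vec) : vec := (c * fst u, c * snd u).
Definition vdot (u v : vec) : R := fst u * fst v + snd u * snd v.
Definition vnorm (u : vec) : R := sqrt (vdot u u).

(* e^{J theta} u, with J = [[0,1],[-1,0]] and e^{J theta} = cos theta I + sin theta J *)
Definition rotJ (theta : R) (u : vec) : vec :=
  (cos theta * fst u + sin theta * snd u, - sin theta * fst u + cos theta * snd u).

(* finite sums over indices a, a+1, ..., n-1 ; bodies 1..n are indices 0..n-1 *)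
Definition sumR_from (a n : nat) (f : nat -> R) : R :=
  fold_right Rplus 0 (map f (seq a (n - a))).
Definition sumR (n : nat) (f : nat -> R) : R := sumR_from 0 n f.
Definition vsumR (n : nat) (f : nat -> vec) : vec :=
  fold_right vadd v0 (map f (seq 0 n)).

Definition is_perm (n : nat) (sigma : nat -> nat) : Prop :=
  (forall j, (j < n)%nat -> (sigma j < n)%nat) /\
  (forall i j, (i < n)%nat -> (j < n)%nat -> sigma i = sigma j -> i = j).

Definition phi (alpha lam : R) : R :=
  if Req_EM_T alpha 1 then - ln lam else Rpower lam (1 - alpha) / (alpha - 1).

Definition force (n : nat) (alpha : R) (mass : nat -> R) (u : nat -> vec) (j : nat) : vec :=
  vsumR n (fun k => if Nat.eq_dec k j then v0 else
    vscale (mass k / Rpower (vnorm (vsub (u j) (u k))) (alpha + 1)) (vsub (u j) (u k))).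

Definition is_nbody_periodic_solution (n : nat) (alpha : R) (mass : nat -> R)
    (q : nat -> R -> vec) : Prop :=
  (exists q' q'' : nat -> R -> vec, forall j t, (j < n)%nat ->
     is_derive (fun s => fst (q j s)) t (fst (q' j t)) /\
     is_derive (fun s => snd (q j s)) t (snd (q' j t)) /\
     is_derive (fun s => fst (q' j s)) t (fst (q'' j t)) /\
     is_derive (fun s => snd (q' j s)) t (snd (q'' j t)) /\
     q'' j t = vscale (-1) (force n alpha mass (fun k => q k t) j)) /\
  (forall j t, (j < n)%nat -> q j (t + 2 * PI) = q j t) /\
  (forall j k t, (j < n)%nat -> (k < n)%nat -> j <> k -> q j t <> q k t).

Definition cont_periodic_path (x : R -> vec) : Prop :=
  (forall t, continuous (fun s => fst (x s)) t /\ continuous (fun s => snd (x s)) t) /\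
  (forall t, x (t + 2 * PI) = x t).

Definition zeta (m p : nat) (x : R -> vec) : R -> vec :=
  fun tau => x (tau - 2 * PI / (INR m * INR p)).

Definition rot_frame (omega nu : R) (q : nat -> R -> vec) (j : nat) (tau : R) : vec :=
  rotJ (- (omega * tau / nu)) (q j (tau / nu)).

Definition H_comet (n : nat) (alpha : R) (mass : nat -> R) (eps : R)
    (xs : nat -> R -> vec) (x : R -> vec) : R :=
  RInt (fun tau => sumR n (fun j =>
          mass j * (phi alpha (vnorm (vsub (x tau) (vscale eps (xs j tau))))
                    - phi alpha (vnorm (x tau))))) 0 (2 * PI).

(* Moon integrand h(x,tau), y_j = x_1 - x_j, sum over j = 2..n (indices 1..n-1) *)
Definition h_moon (n : nat) (alpha : R) (mass : nat -> R) (eps : R)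
    (xs : nat -> R -> vec) (x : vec) (tau : R) : R :=
  let y j := vsub (xs 0%nat tau) (xs j tau) in
  if Req_EM_T alpha 1 then
    sumR_from 1 n (fun j => mass j *
      (- ln (vnorm (vadd (y j) (vscale eps x)) / vnorm (y j))
       + vdot (vscale (/ (vnorm (y j) ^ 2)) (y j)) (vscale eps x)))
  else
    Rpower eps (alpha - 1) * sumR_from 1 n (fun j => mass j *
      (phi alpha (vnorm (vadd (y j) (vscale eps x)))
       + vdot (vscale (/ Rpower (vnorm (y j)) (alpha + 1)) (y j)) (vscale eps x))).

Definition H_moon (n : nat) (alpha : R) (mass : nat -> R) (eps : R)
    (xs : nat -> R -> vec) (x : R -> vec) : R :=
  RInt (fun tau => h_moon n alpha mass eps xs (x tau) tau) 0 (2 * PI).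

(* Main.v *)
Require Import Defs.
From Stdlib Require Import Reals Lra Lia List Permutation.
From Coquelicot Require Import Coquelicot.
Open Scope R_scope.

Lemma fold_perm l l' : Permutation l l' -> fold_right Rplus 0 l = fold_right Rplus 0 l'.
Proof. induction 1; simpl; try congruence; ring. Qed.

Lemma sum_perm a n (F F' : nat -> R) (s : nat -> nat) :
  (forall j, (a <= j < n)%nat -> (a <= s j < n)%nat) ->
  (forall i j, (a <= i < n)%nat -> (a <= j < n)%nat -> s i = s j -> i = j) ->
  (forall j, (a <= j < n)%nat -> F j = F' (s j)) ->
  sumR_from a n F = sumR_from a n F'.
Proof.
  intros Hr Hi HF. unfold sumR_from.
  rewrite (map_ext_in F (fun j => F' (s j))).
  2:{ intros j Hj. apply in_seq in Hj. apply HF. lia. }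
  rewrite <- (map_map s F'). apply fold_perm. apply Permutation_map.
  apply NoDup_Permutation_bis.
  - apply NoDup_map_NoDup_ForallPairs.
    + intros i j Hi' Hj' E. apply in_seq in Hi'. apply in_seq in Hj'. apply Hi; lia || auto.
    + apply seq_NoDup.
  - rewrite length_map. lia.
  - intros y Hy. apply in_map_iff in Hy. destruct Hy as [j [<- Hj]].
    apply in_seq in Hj. apply in_seq. specialize (Hr j). lia.
Qed.

Lemma rotJ_add a b v : rotJ a (rotJ b v) = rotJ (a + b) v.
Proof. destruct v as [v1 v2]. unfold rotJ; simpl. rewrite cos_plus, sin_plus. f_equal; ring. Qed.

Lemma rotJ_period th k v : rotJ (th - 2 * INR k * PI) v = rotJ th v.
Proof.
  unfold rotJ. rewrite <- (cos_period (th - 2 * INR k * PI) k), <- (sin_period (th - 2 * INR k * PI) k).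
  replace (th - 2 * INR k * PI + 2 * INR k * PI) with th by ring. reflexivity.
Qed.

Lemma rotJ_v0 th : rotJ th v0 = v0.
Proof. unfold rotJ, v0; simpl. f_equal; ring. Qed.
From Stdlib Require Import FunctionalExtensionality PropExtensionality.

Lemma shift_is_RInt (F : R -> R) T d l : 0 < T -> 0 <= d <= T ->
  (forall s, F (s + T) = F s) -> is_RInt F 0 T l ->
  is_RInt (fun t => F (t - d)) 0 T l.
Proof.
  intros HT Hd Hper HI.
  assert (Hex : ex_RInt F 0 T) by (exists l; exact HI).
  assert (H1 : ex_RInt F 0 (T - d)) by (apply (@ex_RInt_Chasles_1 R_CompleteNormedModule) with T; [lra|exact Hex]).
  assert (H2 : ex_RInt F (T - d) T) by (apply (@ex_RInt_Chasles_2 R_CompleteNormedModule) with 0; [lra|exact Hex]).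
  assert (Hl : l = plus (RInt F 0 (T - d)) (RInt F (T - d) T)).
  { rewrite (@RInt_Chasles R_CompleteNormedModule) by assumption. symmetry. now apply (@is_RInt_unique R_CompleteNormedModule). }
  rewrite Hl.
  assert (HA : is_RInt (fun t => F (t - d)) 0 d (RInt F (T - d) T)).
  { apply (@RInt_correct R_CompleteNormedModule) in H2.
    assert (E : is_RInt F (1 * 0 + (T - d)) (1 * d + (T - d)) (RInt F (T - d) T)).
    { replace (1 * 0 + (T - d)) with (T - d) by ring.
      replace (1 * d + (T - d)) with T by ring. exact H2. }
    apply is_RInt_comp_lin in E.
    apply is_RInt_ext with (2 := E). intros x _.
    change (scal 1 (F (1 * x + (T - d)))) with (1 * F (1 * x + (T - d))). rewrite Rmult_1_l. rewrite <- (Hper (x - d)). f_equal. ring. }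
  assert (HB : is_RInt (fun t => F (t - d)) d T (RInt F 0 (T - d))).
  { apply (@RInt_correct R_CompleteNormedModule) in H1.
    assert (E : is_RInt F (1 * d + - d) (1 * T + - d) (RInt F 0 (T - d))).
    { replace (1 * d + - d) with 0 by ring.
      replace (1 * T + - d) with (T - d) by ring. exact H1. }
    apply is_RInt_comp_lin in E.
    apply is_RInt_ext with (2 := E). intros x _.
    change (scal 1 (F (1 * x + - d))) with (1 * F (1 * x + - d)). rewrite Rmult_1_l. f_equal. ring. }
  rewrite plus_comm.
  exact (is_RInt_Chasles _ _ _ _ _ _ HA HB).
Qed.

Lemma RInt_shift_periodic (F : R -> R) T c : 0 < T -> 0 <= c <= T ->
  (forall s, F (s + T) = F s) ->
  RInt (fun t => F (t - c)) 0 T = RInt F 0 T.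
Proof.
  intros HT Hc Hper.
  assert (E : is_RInt (fun t => F (t - c)) 0 T = is_RInt F 0 T).
  { apply functional_extensionality; intro l.
    apply propositional_extensionality; split; intro H.
    - apply shift_is_RInt with (d := T - c) in H; try lra.
      + apply is_RInt_ext with (2 := H). intros x _.
        simpl. replace x with ((x - c - (T - c)) + T) at 2 by ring. rewrite Hper. f_equal. ring.
      + intro s. rewrite <- (Hper (s - c)). f_equal. ring.
    - now apply shift_is_RInt. }
  unfold RInt. f_equal. exact E.
Qed.

Lemma comet_ext n alpha mass eps (xs : nat -> R -> vec) (y : vec) t1 t2 s :
  is_perm n s -> (forall j, (j < n)%nat -> mass j = mass (s j)) ->
  (forall j, (j < n)%nat -> xs j t1 = xs (s j) t2) ->
  sumR n (fun j => mass j * (phi alpha (vnorm (vsub y (vscale eps (xs j t1)))) - phi alpha (vnorm y)))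
  = sumR n (fun j => mass j * (phi alpha (vnorm (vsub y (vscale eps (xs j t2)))) - phi alpha (vnorm y))).
Proof.
  intros [Hr Hi] Hm Hx. unfold sumR. apply sum_perm with s.
  - intros j Hj. specialize (Hr j). lia.
  - intros i j Hi' Hj'. apply Hi; lia.
  - intros j Hj. rewrite (Hm j), (Hx j) by lia. reflexivity.
Qed.

Lemma moon_ext n alpha mass eps (xs : nat -> R -> vec) (y : vec) t1 t2 s :
  (forall j, (1 <= j < n)%nat -> (1 <= s j < n)%nat) ->
  (forall i j, (1 <= i < n)%nat -> (1 <= j < n)%nat -> s i = s j -> i = j) ->
  (forall j, (1 <= j < n)%nat -> mass j = mass (s j)) ->
  xs 0%nat t1 = xs 0%nat t2 ->
  (forall j, (1 <= j < n)%nat -> xs j t1 = xs (s j) t2) ->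
  h_moon n alpha mass eps xs y t1 = h_moon n alpha mass eps xs y t2.
Proof.
  intros Hr Hi Hm H0 Hx. unfold h_moon. cbv zeta.
  destruct (Req_EM_T alpha 1).
  - apply sum_perm with s; auto.
    intros j Hj. rewrite (Hm j), (Hx j), H0 by lia. reflexivity.
  - f_equal. apply sum_perm with s; auto.
    intros j Hj. rewrite (Hm j), (Hx j), H0 by lia. reflexivity.
Qed.

Theorem lemma2 (n : nat) (alpha : R) (mass : nat -> R) (m p : nat)
  (Hn : (2 <= n)%nat) (Halpha : 1 <= alpha)
  (Hmass : forall j, (j < n)%nat -> 0 < mass j)
  (Hm : (2 <= m)%nat) (Hp : (1 <= p)%nat) :
  (* (a) Comet *)
  (forall (q : nat -> R -> vec) (qq : nat) (eps : R) (sigma : nat -> nat),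
     is_nbody_periodic_solution n alpha mass q ->
     (forall t, vsumR n (fun j => vscale (mass j) (q j t)) = v0) ->
     sumR n mass = 1 ->
     (1 <= qq)%nat -> 0 < eps ->
     is_perm n sigma ->
     (forall j, (j < n)%nat -> mass j = mass (sigma j)) ->
     (forall j t, (j < n)%nat ->
        q j (t + 2 * PI * INR qq / (INR m * INR p)) = rotJ (2 * PI / INR m) (q (sigma j) t)) ->
     let omega := INR p / INR qq in
     let nu := 1 / INR qq in
     let xs := rot_frame omega nu q in
     forall x : R -> vec,
       cont_periodic_path x ->
       (forall tau, x tau <> v0) ->
       (forall j tau, (j < n)%nat -> x tau <> vscale eps (xs j tau)) ->
       H_comet n alpha mass eps xs (zeta m p x) = H_comet n alpha mass eps xs x)
  /\
  (* (b) Moon *)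
  (forall (a : nat -> vec) (omega eps : R) (sigma : nat -> nat),
     mass 0%nat = 1 ->
     (forall j k, (j < n)%nat -> (k < n)%nat -> j <> k -> a j <> a k) ->
     (forall j, (j < n)%nat -> a j = force n alpha mass a j) ->
     1 < omega -> 0 < eps ->
     is_perm n sigma -> sigma 0%nat = 0%nat -> a 0%nat = v0 ->
     (forall j, (1 <= j < n)%nat -> mass j = mass (sigma j)) ->
     (forall j, (1 <= j < n)%nat -> a j = rotJ (2 * PI / INR m) (a (sigma j))) ->
     let q := fun j t => rotJ t (a j) in
     let nu := (omega - 1) / INR p in
     let xs := rot_frame omega nu q in
     forall x : R -> vec,
       cont_periodic_path x ->
       (forall j tau, (1 <= j < n)%nat ->
          vadd (vsub (xs 0%nat tau) (xs j tau)) (vscale eps (x tau)) <> v0) ->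
       H_moon n alpha mass eps xs (zeta m p x) = H_moon n alpha mass eps xs x).
Proof.
  assert (Hm0 : 0 < INR m) by (apply lt_0_INR; lia).
  assert (Hp0 : 0 < INR p) by (apply lt_0_INR; lia).
  assert (Hm1 : 1 <= INR m) by (apply (le_INR 1); lia).
  assert (Hp1 : 1 <= INR p) by (apply (le_INR 1); lia).
  assert (HPI := PI_RGT_0).
  set (c := 2 * PI / (INR m * INR p)).
  assert (Hc : 0 <= c <= 2 * PI).
  { unfold c. split.
    - apply Rlt_le, Rdiv_lt_0_compat; [lra | apply Rmult_lt_0_compat; lra].
    - apply Rmult_le_reg_r with (INR m * INR p). apply Rmult_lt_0_compat; lra.
      unfold Rdiv. rewrite Rmult_assoc, Rinv_l by (apply Rgt_not_eq, Rmult_lt_0_compat; lra).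
      assert (1 <= INR m * INR p) by nra. nra. }
  split.
  - intros q qq eps sigma Hsol _ _ Hqq Heps Hperm Hms Hsym omega nu xs x Hx _ _.
    assert (Hq0 : 0 < INR qq) by (apply lt_0_INR; lia).
    assert (Hqper : forall j t k, (j < n)%nat -> q j (t + 2 * PI * INR k) = q j t).
    { intros j t k Hj. induction k.
      - simpl. f_equal. ring.
      - rewrite S_INR. destruct Hsol as [_ [Hper _]].
        replace (t + 2 * PI * (INR k + 1)) with ((t + 2 * PI * INR k) + 2 * PI) by ring.
        rewrite Hper by exact Hj. exact IHk. }
    assert (Hkey : forall j tau, (j < n)%nat -> xs j tau = xs (sigma j) (tau - c)).
    { intros j tau Hj. unfold xs, rot_frame, omega, nu.
      assert (E : tau / (1 / INR qq) = (tau - c) / (1 / INR qq) + 2 * PI * INR qq / (INR m * INR p))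
        by (unfold c; field; lra).
      rewrite E, Hsym by exact Hj. rewrite rotJ_add. f_equal. unfold c. field. lra. }
    assert (Hxper : forall j tau, (j < n)%nat -> xs j (tau + 2 * PI) = xs j tau).
    { intros j tau Hj. unfold xs, rot_frame, omega, nu.
      replace ((tau + 2 * PI) / (1 / INR qq)) with (tau / (1 / INR qq) + 2 * PI * INR qq) by (field; lra).
      rewrite Hqper by exact Hj.
      replace (- (INR p / INR qq * (tau + 2 * PI) / (1 / INR qq)))
        with (- (INR p / INR qq * tau / (1 / INR qq)) - 2 * INR p * PI) by (field; lra).
      apply rotJ_period. }
    destruct Hx as [_ Hxp].
    unfold H_comet, zeta. fold c.
    set (F := fun s => sumR n (fun j => mass j * (phi alpha (vnorm (vsub (x s) (vscale eps (xs j s)))) - phi alpha (vnorm (x s))))).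
    transitivity (RInt (fun t => F (t - c)) 0 (2 * PI)).
    + apply RInt_ext. intros t _. unfold F.
      apply comet_ext with sigma; auto.
    + apply RInt_shift_periodic; try lra.
      intro s. unfold F. rewrite Hxp.
      apply comet_ext with (fun j => j).
      * split; auto.
      * auto.
      * intros j Hj. apply Hxper, Hj.
  - intros a omega eps sigma _ _ _ Hom Heps Hperm Hs0 Ha0 Hms Hsym q nu xs x Hx _.
    destruct Hperm as [Hr Hi].
    assert (Hr1 : forall j, (1 <= j < n)%nat -> (1 <= sigma j < n)%nat).
    { intros j Hj. split; [| apply Hr; lia].
      destruct (sigma j) eqn:E; [| lia].
      assert (j = 0%nat) by (apply Hi; lia || congruence). lia. }
    assert (Hi1 : forall i j, (1 <= i < n)%nat -> (1 <= j < n)%nat -> sigma i = sigma j -> i = j)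
      by (intros; apply Hi; lia || auto).
    assert (Hx0 : forall tau, xs 0%nat tau = v0).
    { intros tau. unfold xs, rot_frame, q. rewrite Ha0, !rotJ_v0. reflexivity. }
    assert (Hkey : forall j tau, (1 <= j < n)%nat -> xs j tau = xs (sigma j) (tau - c)).
    { intros j tau Hj. unfold xs, rot_frame, q, nu.
      rewrite (Hsym j Hj). rewrite !rotJ_add. f_equal. unfold c. field. lra. }
    assert (Hxper : forall j tau, xs j (tau + 2 * PI) = xs j tau).
    { intros j tau. unfold xs, rot_frame, q, nu. rewrite !rotJ_add.
      replace (- (omega * (tau + 2 * PI) / ((omega - 1) / INR p)) + (tau + 2 * PI) / ((omega - 1) / INR p))
        with ((- (omega * tau / ((omega - 1) / INR p)) + tau / ((omega - 1) / INR p)) - 2 * INR p * PI)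
        by (field; lra).
      apply rotJ_period. }
    destruct Hx as [_ Hxp].
    unfold H_moon, zeta. fold c.
    set (F := fun s => h_moon n alpha mass eps xs (x s) s).
    transitivity (RInt (fun t => F (t - c)) 0 (2 * PI)).
    + apply RInt_ext. intros t _. unfold F.
      apply moon_ext with sigma; auto. rewrite !Hx0; reflexivity.
    + apply RInt_shift_periodic; try lra.
      intro s. unfold F. rewrite Hxp.
      apply moon_ext with (fun j => j); auto.
Qed.
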